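(* For any two relatively prime integers $m,n\ge2$, \[\operatorname{spec}(U_m)\cap\operatorname{spec}(U_n)=\{0,1,-1\},\] where $\operatorname{spec}(U_q)$ is the set of $\lambda\in\mathbb{R}$ such that $U_qf=\lambda f$ for some nonzero $f\in\mathcal{R}$.
   Context: $\mathcal{R}$ denotes the real vector space of rational functions $f(x)=A(x)/B(x)$ with $A,B\in\mathbb{R}[x]$, $B(0)\neq 0$ and $\deg A<\deg B$. For $f$ with Taylor expansion $f(x)=\sum_{n\ge0}a_nx^n$ at $0$ and a positive integer $q$, $U_qf(x)=\sum_{n\ge 0}a_{qn}x^n$. *)

(* Defs.v *)
From HB Require Import structures.
From mathcomp Require Import all_boot all_order all_algebra.
From mathcomp Require Import reals.
Set Implicit Arguments. Unset Strict Implicit. Unset Printing Implicit Defensive.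
Import Order.TTheory GRing.Theory Num.Theory.
Local Open Scope ring_scope.

(* f = A/B belongs to the space \mathcal{R}: B(0) <> 0 and deg A < deg B
   (size = degree + 1; for A = 0 this holds whenever B <> 0). *)
Definition inRat (R : realType) (A B : {poly R}) : Prop :=
  B.[0] != 0 /\ (size A < size B)%N.

(* a is the Taylor sequence of A/B at 0, i.e. B(x) * sum_n a_n x^n = A(x)
   as formal power series (coefficientwise Cauchy product). *)
Definition is_taylor (R : realType) (A B : {poly R}) (a : nat -> R) : Prop :=
  forall n : nat, \sum_(k < n.+1) B`_k * a (n - k)%N = A`_n.

(* lambda is an eigenvalue of U_q on \mathcal{R}: there is a nonzero
   f = A/B in \mathcal{R} with Taylor coefficients a such that
   U_q f = lambda f, i.e. a_{q k} = lambda a_k for all k. *)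
Definition in_spec (R : realType) (q : nat) (lam : R) : Prop :=
  exists (A B : {poly R}) (a : nat -> R),
    [/\ inRat A B, A != 0, is_taylor A B a &
        forall k : nat, a (q * k)%N = lam * a k].

(* Main.v *)
Require Import Defs.
From HB Require Import structures.
From mathcomp Require Import all_boot all_order all_algebra.
From mathcomp Require Import reals.
From mathcomp Require Import complex ring zify.
From Stdlib Require Import Classical FunctionalExtensionality.
Import Order.TTheory GRing.Theory Num.Theory.
Local Open Scope ring_scope.

Section Lfun.
Variable K : fieldType.
Implicit Types (a b : nat -> K) (P Q : {poly K}).

Definition Lf a P := \sum_(i < size P) P`_i * a i.

Lemma Lf_widen a P n : (size P <= n)%N -> Lf a P = \sum_(i < n) P`_i * a i.
Proof.
move=> hn; rewrite /Lf (big_ord_widen n (fun i => P`_i * a i) hn).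
rewrite [RHS](bigID (fun i : 'I_n => (i < size P)%N)) /= [X in _ = _ + X]big1 ?addr0 //.
by move=> i; rewrite -leqNgt => hi; rewrite nth_default // mul0r.
Qed.

Lemma LfD a P Q : Lf a (P + Q) = Lf a P + Lf a Q.
Proof.
set n := maxn (size P) (size Q).
have hP : (size P <= n)%N by rewrite leq_maxl.
have hQ : (size Q <= n)%N by rewrite leq_maxr.
have hPQ : (size (P + Q)%R <= n)%N by rewrite (leq_trans (size_polyD _ _)).
rewrite (Lf_widen _ _ _ hP) (Lf_widen _ _ _ hQ) (Lf_widen _ _ _ hPQ) -big_split /=.
by apply: eq_bigr => i _; rewrite coefD mulrDl.
Qed.

Lemma LfZ a c P : Lf a (c *: P) = c * Lf a P.
Proof.
rewrite (Lf_widen _ _ _ (size_scale_leq c P)) /Lf mulr_sumr.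
by apply: eq_bigr => i _; rewrite coefZ mulrA.
Qed.

Lemma LfN a P : Lf a (- P) = - Lf a P.
Proof. by rewrite -scaleN1r LfZ mulN1r. Qed.

Lemma LfB a P Q : Lf a (P - Q) = Lf a P - Lf a Q.
Proof. by rewrite LfD LfN. Qed.

Lemma Lf0 a : Lf a 0 = 0.
Proof. by rewrite /Lf size_poly0 big_ord0. Qed.

Lemma LfXn a n : Lf a 'X^n = a n.
Proof.
rewrite (Lf_widen _ _ _ (leqnn _)) size_polyXn big_ord_recr /= big1 ?add0r.
  by rewrite coefXn eqxx mul1r.
by move=> i _; rewrite coefXn (ltn_eqF (ltn_ord i)) mul0r.
Qed.

Lemma Lf_seqB a b P : Lf (fun i => a i - b i) P = Lf a P - Lf b P.
Proof. by rewrite /Lf -sumrB; apply: eq_bigr => i _; rewrite mulrBr. Qed.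

Lemma Lf_seqZ a c P : Lf (fun i => c * a i) P = c * Lf a P.
Proof. by rewrite /Lf mulr_sumr; apply: eq_bigr => i _; rewrite mulrCA. Qed.

Lemma Lf_mulXn a P n : Lf a (P * 'X^n) = Lf (fun i => a (i + n)%N) P.
Proof.
have h : (size (P * 'X^n)%R <= size P + n)%N.
  by rewrite (leq_trans (size_polyMleq _ _)) // size_polyXn addnS.
rewrite (Lf_widen _ _ _ h) addnC big_split_ord /= big1 ?add0r.
  rewrite /Lf; apply: eq_bigr => i _; rewrite coefMXn /= ltnNge leq_addr /=.
  by rewrite addKn addnC.
by move=> i _; rewrite coefMXn /= ltn_ord mul0r.
Qed.

Lemma Lf_comp a P q : (0 < q)%N ->
  Lf a (P \Po 'X^q) = Lf (fun i => a (q * i)%N) P.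
Proof.
move=> q0; elim/poly_ind: P a => [|P c IH] a.
  by rewrite comp_poly0 !Lf0.
rewrite comp_poly_MXaddC !LfD.
have LC : forall b d, Lf b d%:P = d * b 0%N.
  by move=> b d; rewrite -alg_polyC LfZ -[1](expr0 'X) LfXn.
rewrite !LC muln0 Lf_mulXn -(expr1 'X) Lf_mulXn IH; congr (_ + _).
by rewrite /Lf; apply: eq_bigr => i _; rewrite mulnDr muln1.
Qed.

Definition ann a P := forall Q, Lf a (Q * P) = 0.

Lemma ann_mull a P Q : ann a P -> ann a (Q * P).
Proof. by move=> h R; rewrite mulrA h. Qed.

Lemma ann_dvdp a P Q : ann a P -> P %| Q -> ann a Q.
Proof. by move=> h /dvdpP [D ->]; apply: ann_mull. Qed.

Lemma ann_modp a P Q : ann a P -> ann a Q -> ann a (Q %% P).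
Proof.
move=> hP hQ R.
have -> : Q %% P = Q - (Q %/ P) * P by rewrite {2}(divp_eq Q P) addrC addKr.
by rewrite mulrBr LfB hQ mulrA hP subr0.
Qed.

Lemma minpoly_ex a P : P != 0 -> ann a P ->
  exists M, [/\ M != 0, ann a M & forall Q, ann a Q -> M %| Q].
Proof.
have H : forall n P, (size P <= n)%N -> P != 0 -> ann a P ->
  exists M, [/\ M != 0, ann a M & forall Q, ann a Q -> M %| Q].
  elim=> [|n IH] P0 hs hP ha.
    by move: hP; rewrite -size_poly_eq0 -leqn0 hs.
  case: (classic (forall Q, ann a Q -> P0 %| Q)) => [h|]; first by exists P0.
  move=> hn; have [Q hQn] := not_all_ex_not _ _ hn; have [hQ nd] := imply_to_and _ _ hQn.
  have hR : Q %% P0 != 0 by apply/negP => /eqP h0; apply: nd; apply/modp_eq0P.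
  apply: (IH (Q %% P0)) => //; last exact: ann_modp.
  by rewrite -ltnS (leq_trans _ hs) // ltn_modp.
by move=> hP ha; apply: (H (size P) P).
Qed.

Lemma ann_of_Xn a P : (forall n, Lf a ('X^n * P) = 0) -> ann a P.
Proof.
move=> h.
have H : forall Q n, Lf a (Q * 'X^n * P) = 0.
  elim/poly_ind => [|Q c IH] n; first by rewrite !mul0r Lf0.
  have -> : (Q * 'X + c%:P) * 'X^n * P = Q * 'X^(n.+1) * P + c *: ('X^n * P).
    by rewrite -mul_polyC exprS; ring.
  by rewrite LfD LfZ IH h mulr0 addr0.
by move=> Q; have := H Q 0%N; rewrite expr0 mulr1.
Qed.
End Lfun.
Arguments Lf {K}.
Arguments ann {K}.
Arguments ann_dvdp {K a P Q}.
Arguments ann_mull {K a P}.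
Arguments minpoly_ex {K a P}.
Arguments Lf_seqZ {K}.
Arguments Lf_comp {K}.
Arguments Lf_seqB {K}.
Arguments Lf_mulXn {K}.
Arguments LfXn {K}.
Arguments ann_of_Xn {K a P}.
Section Step1.
Variable K : closedFieldType.

Lemma step1 (a : nat -> K) (P0 : {poly K}) (q : nat) (lam : K) :
  (1 < q)%N -> P0 != 0 -> ~~ root P0 0 -> ann a P0 -> lam != 0 ->
  (forall k, a (q * k)%N = lam * a k) ->
  exists N D, (0 < N)%N /\ ann a (('X^N - 1) ^+ D).
Proof.
move=> q1 hP0 hr0 ha hlam hq.
have q0 : (0 < q)%N by apply: ltnW.
have [M [M0 hM hMin]] := minpoly_ex hP0 ha.
have [r hr] := closed_field_poly_normal M.
set M1 := \prod_(z <- r) ('X - z%:P) in hr.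
have lc0 : lead_coef M != 0 by rewrite lead_coef_eq0.
have hM1e : M1 = (lead_coef M)^-1 *: M by rewrite [X in _ *: X]hr scalerA mulVf // scale1r.
have hM1 : ann a M1 by rewrite hM1e -mul_polyC; apply: ann_mull.
have hMin1 : forall Q, ann a Q -> M1 %| Q.
  move=> Q hQ; apply: dvdp_trans (hMin Q hQ).
  by rewrite [X in _ %| X]hr dvdpZr.
set Mq := \prod_(z <- r) ('X - (z ^+ q)%:P).
have hcomp : M1 %| Mq \Po 'X^q.
  rewrite /Mq rmorph_prod /M1.
  elim: r {hr hM1e hM1 hMin1 M1 Mq} => [|z r IH]; first by rewrite !big_nil.
  rewrite !big_cons; apply: dvdp_mul => //.
  rewrite dvdp_XsubCl /root /= comp_polyB comp_polyX comp_polyC.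
  by rewrite !hornerE subrr.
have hMq : ann a Mq.
  have h1 : ann a (Mq \Po 'X^q) by apply: ann_dvdp hM1 hcomp.
  move=> Q.
  have -> : Lf a (Q * Mq) = lam^-1 * Lf (fun i => lam * a i) (Q * Mq).
    by rewrite Lf_seqZ mulrA mulVf // mul1r.
  have -> : (fun i => lam * a i) = (fun i => a (q * i)%N).
    by apply: functional_extensionality => i; rewrite hq.
  by rewrite -Lf_comp // comp_polyM h1 mulr0.
have eqM : M1 = Mq.
  apply/eqP; rewrite -eqp_monic ?monic_prod_XsubC //.
  by rewrite -dvdp_size_eqp ?hMin1 // /M1 /Mq !size_prod_XsubC.
have hclosed : forall z, z \in r -> z ^+ q \in r.
  move=> z zr; rewrite -root_prod_XsubC -/M1 eqM /Mq -(big_map (fun z => z ^+ q) xpredT (fun w => 'X - w%:P)).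
  by rewrite root_prod_XsubC; apply/mapP; exists z.
have nz : forall z, z \in r -> z != 0.
  move=> z zr; apply/negP => /eqP z0; move: hr0; rewrite -z0.
  by move/negP; apply; apply: root_dvdp (hMin1 _ ha) _; rewrite root_prod_XsubC.
have hiter : forall z i, z \in r -> z ^+ (q ^ i) \in r.
  move=> z; elim=> [|i IH] zr; first by rewrite expn0 expr1.
  by rewrite expnSr exprM; apply: hclosed; apply: IH.
have unity : forall z, z \in r -> exists N, (0 < N)%N /\ z ^+ N = 1.
  move=> z zr.
  set s := [seq z ^+ (q ^ i) | i <- iota 0 (size r).+1].
  have : ~~ uniq s.
    apply/negP => us.
    have := uniq_leq_size us.
    have sub : {subset s <= r} by move=> w /mapP [i _ ->]; apply: hiter.
    by move/(_ r sub); rewrite size_map size_iota ltnn.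
  case/(uniqPn (0:K)) => i [j [ij js e]].
  rewrite size_map size_iota in js.
  have ilt : (i < (size r).+1)%N by apply: ltn_trans ij js.
  rewrite /s (nth_map 0%N) ?size_iota // (nth_map 0%N) ?size_iota // !nth_iota // !add0n in e.
  exists (q ^ j - q ^ i)%N; split; first by rewrite subn_gt0 ltn_exp2l.
  have hz : z ^+ (q ^ i) != 0 by rewrite expf_neq0 // nz.
  apply: (mulfI hz); rewrite -exprD subnKC ?mulr1 //.
  by rewrite ltnW // ltn_exp2l.
have [N [N0 hN]] : exists N, (0 < N)%N /\ forall z, z \in r -> z ^+ N = 1.
  have : forall s : seq K, {subset s <= r} -> exists N, (0 < N)%N /\ forall z, z \in s -> z ^+ N = 1.
    elim=> [|w s IH] sub; first by exists 1%N.
    have [N1 [N10 h1]] := IH (fun x xs => sub x (@mem_behead _ (w :: s) x xs)).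
    have [Nw [Nw0 hw]] := unity w (sub w (mem_head _ _)).
    exists (Nw * N1)%N; split; first by rewrite muln_gt0 Nw0.
    move=> x; rewrite inE => /orP [/eqP ->|xs]; first by rewrite exprM hw expr1n.
    by rewrite mulnC exprM h1 // expr1n.
  by move/(_ r (fun x h => h)).
exists N, (size r); split => //.
apply: ann_dvdp hM1 _.
have : forall s : seq K, {subset s <= r} -> \prod_(z <- s) ('X - z%:P) %| ('X^N - 1) ^+ (size s).
  elim=> [|w s IH] sub; first by rewrite big_nil expr0.
  rewrite big_cons /= exprS; apply: dvdp_mul; last first.
    by apply: IH => x xs; apply: sub; rewrite inE xs orbT.
  by rewrite dvdp_XsubCl /root !hornerE hN ?subrr // sub // mem_head.
by move/(_ r (fun x h => h)).
Qed.
End Step1.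
Section Step2.
Variable R : realFieldType.
Variables (N q : nat).
Implicit Types (b y : nat -> R).

Definition Dl b := fun k => b (k + N)%N - b k.
Definition Tq b := fun k => b (q * k)%N.
Definition Eq b := fun k => \sum_(i < q) b (k + N * i)%N.
Definition sc (c : R) b := fun k => c * b k.

Lemma DT b : Dl (Tq b) = Tq (Eq (Dl b)).
Proof.
apply: functional_extensionality => k; rewrite /Dl /Tq /Eq.
rewrite (_ : (q * (k + N) = q * k + N * q)%N); last by rewrite mulnDr [(q*N)%N]mulnC.
have := @telescope_sumr _ 0 q (fun i => b (q * k + N * i)%N) (leq0n q).
rewrite big_mkord muln0 addn0 => <-.
by apply: eq_bigr => i _; rewrite mulnS addnA addnAC.
Qed.

Lemma DE b : Dl (Eq b) = Eq (Dl b).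
Proof.
apply: functional_extensionality => k; rewrite /Dl /Eq -sumrB.
by apply: eq_bigr => i _; rewrite addnAC.
Qed.

Lemma DEiter j b : Dl (iter j Eq b) = iter j Eq (Dl b).
Proof. by elim: j b => [|j IH] b //=; rewrite DE IH. Qed.

Lemma iterDT j b : iter j Dl (Tq b) = Tq (iter j Eq (iter j Dl b)).
Proof. by elim: j => [|j IH] //=; rewrite IH DT DEiter. Qed.

Lemma Dl_sc c b : Dl (sc c b) = sc c (Dl b).
Proof. by apply: functional_extensionality => k; rewrite /Dl /sc mulrBr. Qed.

Lemma iterDl_sc j c b : iter j Dl (sc c b) = sc c (iter j Dl b).
Proof. by elim: j => [|j IH] //=; rewrite IH Dl_sc. Qed.

Lemma Eq_sc c b : Eq (sc c b) = sc c (Eq b).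
Proof. by apply: functional_extensionality => k; rewrite /Eq /sc mulr_sumr. Qed.

Lemma per_step y : Dl y = (fun _ => 0) -> forall k i, y (k + N * i)%N = y k.
Proof.
move=> h k; elim=> [|i IH]; first by rewrite muln0 addn0.
have := congr1 (fun f => f (k + N * i)%N) h; rewrite /Dl /= => /eqP; rewrite subr_eq0 => /eqP e.
by rewrite mulnS addnA addnAC e IH.
Qed.

Lemma Eq_per y : Dl y = (fun _ => 0) -> Eq y = sc q%:R y.
Proof.
move=> h; apply: functional_extensionality => k; rewrite /Eq /sc.
rewrite (eq_bigr (fun _ => y k)); last by move=> i _; rewrite per_step.
by rewrite sumr_const card_ord mulr_natl.
Qed.

Lemma iterEq_per j y : Dl y = (fun _ => 0) -> iter j Eq y = sc (q ^ j)%:R y.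
Proof.
move=> h; elim: j => [|j IH] /=.
  by apply: functional_extensionality => k; rewrite /sc expn0 mul1r.
rewrite IH Eq_sc Eq_per //; apply: functional_extensionality => k.
by rewrite /sc mulrA expnSr natrM mulrC.
Qed.

Lemma Lf_Dl b P : Lf (Dl b) P = Lf b (P * ('X^N - 1)).
Proof.
by rewrite /Dl Lf_seqB mulrBr mulr1 LfB Lf_mulXn.
Qed.

Lemma Lf_iterDl D b P : Lf (iter D Dl b) P = Lf b (P * ('X^N - 1) ^+ D).
Proof.
elim: D b P => [|D IH] b P; first by rewrite expr0 mulr1.
by rewrite iterSr IH Lf_Dl exprSr mulrA.
Qed.

Lemma step2 (a : nat -> R) lam : (0 < N)%N -> (0 < q)%N -> (exists k, a k != 0) ->
  lam != 0 -> (forall k, a (q * k)%N = lam * a k) ->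
  (exists D, iter D Dl a = (fun _ => 0)) -> exists j, `|lam| = (q ^ j)%:R.
Proof.
move=> N0 q0 [k0 hk0] hlam hq [D hD].
have [j [[k hk] hj]] : exists j, (exists k, iter j Dl a k != 0) /\ iter j.+1 Dl a = (fun _ => 0).
  elim: D hD => [|D IH] hD; first by move: hk0; rewrite /= in hD; rewrite hD /= eqxx.
  case: (classic (iter D Dl a = (fun _ => 0))) => [h|h]; first exact: IH.
  exists D; split => //.
  have [k hk] : exists k, ~ (iter D Dl a k = 0).
    apply: not_all_ex_not => hall; apply: h; apply: functional_extensionality => x; exact: hall x.
  by exists k; apply/eqP.
set y := iter j Dl a in hk hj.
have hy : Dl y = (fun _ => 0) by rewrite -hj.
have hT : Tq a = sc lam a by apply: functional_extensionality => x; rewrite /Tq /sc hq.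
have e := iterDT j a.
rewrite hT iterDl_sc -/y iterEq_per // in e.
have qj0 : ((q ^ j)%:R : R) != 0 by rewrite pnatr_eq0 -lt0n expn_gt0 q0.
set mu := lam / (q ^ j)%:R.
have hmu : forall x, y (q * x)%N = mu * y x.
  move=> x; have := congr1 (fun f => f x) e; rewrite /sc /Tq /= => h.
  by apply: (mulfI qj0); rewrite -h /mu mulrA mulrCA mulfV // mulr1.
have hmui : forall i x, y (q ^ i * x)%N = mu ^+ i * y x.
  elim=> [|i IH] x; first by rewrite expn0 mul1n expr0 mul1r.
  by rewrite expnS -mulnA hmu IH exprS mulrA.
have hper : forall u, y u = y (u %% N)%N.
  move=> u; rewrite {1}(divn_eq u N) addnC mulnC.
  by rewrite (per_step _ hy).
clearbody y.
set s := [seq ((q ^ i) %% N)%N | i <- iota 0 N.+1].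
have : ~~ uniq s.
  apply/negP => us.
  have sub : {subset s <= iota 0 N}.
    by move=> w /mapP [i _ ->]; rewrite mem_iota add0n ltn_pmod.
  by have := uniq_leq_size us sub; rewrite size_map !size_iota ltnn.
case/(uniqPn 0%N) => i [i1 [ii1 i1s e1]].
rewrite size_map size_iota in i1s.
have ilt : (i < N.+1)%N by apply: ltn_trans ii1 i1s.
rewrite /s (nth_map 0%N) ?size_iota // (nth_map 0%N) ?size_iota // !nth_iota // !add0n in e1.
have e2 : mu ^+ i1 * y k = mu ^+ i * y k.
  rewrite -(hmui i1 k) -(hmui i k) (hper (q ^ i1 * k)%N) (hper (q ^ i * k)%N).
  congr (y _); rewrite -(modnMml (q ^ i1)) -e1; exact: modnMml.
have mu0 : mu != 0 by rewrite /mu mulf_neq0 // invr_eq0.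
have e3 : mu ^+ (i1 - i) = 1.
  have hmi : mu ^+ i != 0 by apply: expf_neq0.
  have e4 : mu ^+ i1 = mu ^+ i by apply: (mulIf hk).
  have e5 : (i + (i1 - i) = i1)%N by apply: subnKC; apply: ltnW.
  apply: (mulfI hmi); rewrite mulr1 -exprD e5; exact: e4.
have amu : `|mu| = 1.
  have h1 : `|mu| ^+ (i1 - i) = 1 by rewrite -normrX e3 normr1.
  have hp : (0 < i1 - i)%N by rewrite subn_gt0.
  apply/eqP; rewrite -(pexpr_eq1 hp (normr_ge0 mu)); apply/eqP; exact: h1.
exists j; have -> : lam = mu * (q ^ j)%:R by rewrite /mu mulfVK.
by rewrite normrM amu mul1r ger0_norm.
Qed.
End Step2.
Section Main.
Variable R : realType.

Lemma Lf_map (a : nat -> R) (P : {poly R}) :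
  Lf (fun i => real_complex R (a i)) (map_poly (real_complex R) P) = real_complex R (Lf a P).
Proof.
rewrite /Lf size_map_poly rmorph_sum /=; apply: eq_bigr => i _.
by rewrite coef_map rmorphM.
Qed.

Lemma sum_delta n (j : nat) (F : nat -> R) :
  \sum_(k < n.+1) ((k : nat) == j)%:R * F k = if (j <= n)%N then F j else 0.
Proof.
case: (leqP j n) => h.
  rewrite (bigD1 (Ordinal (h : (j < n.+1)%N))) //=.
  rewrite eqxx mul1r big1 ?addr0 //.
  move=> k hk; case: eqP => [e|_]; last by rewrite mul0r.
  have ek : k = Ordinal (h : (j < n.+1)%N) by apply: val_inj.
  by move: hk; rewrite ek eqxx.
rewrite big1 // => k _; rewrite ltn_eqF ?mul0r //.
exact: leq_trans (ltn_ord k) h.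
Qed.

Lemma periodic_spec (p q : nat) (c : nat -> R) lam : (0 < p)%N ->
  (exists i, (i < p)%N /\ c i != 0) ->
  (forall k, c ((q * k) %% p)%N = lam * c (k %% p)%N) -> in_spec q lam.
Proof.
move=> p0 [i0 [ip ci0]] hc.
exists (\poly_(i < p) c i), (1 - 'X^p), (fun k => c (k %% p)%N); split.
- split; first by rewrite !hornerE expr0n eqn0Ngt p0 subr0 oner_neq0.
  rewrite -opprB size_polyN -polyC1 size_XnsubC //.
  by rewrite ltnS size_poly.
- apply/eqP => h; have := congr1 (fun P : {poly R} => P`_i0) h.
  by rewrite coef_poly ip coef0; apply/eqP.
- move=> n.
  rewrite (eq_bigr (fun k : 'I_n.+1 => ((k : nat) == 0%N)%:R * c ((n - k) %% p)%N
            - ((k : nat) == p)%:R * c ((n - k) %% p)%N)); last first.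
    by move=> k _; rewrite coefB coef1 coefXn mulrBl.
  rewrite sumrB !(sum_delta n _ (fun k => c ((n - k) %% p)%N)) /= subn0 coef_poly.
  case: (leqP p n) => h.
    by rewrite -{1}(subnK h) modnDr subrr.
  by rewrite subr0 modn_small.
- by move=> k; apply: hc.
Qed.

Lemma spec_examples q : (1 < q)%N ->
  [/\ in_spec q (0 : R), in_spec q (1 : R) & in_spec q (-1 : R)].
Proof.
move=> q1; have q0 : (0 < q)%N by apply: ltnW.
split.
- apply: (@periodic_spec q q (fun i => (i == 1%N)%:R)) => //.
    by exists 1%N; split => //; rewrite eqxx oner_neq0.
  by move=> k; rewrite modnMr mul0r.
- apply: (@periodic_spec 1 q (fun _ => 1)) => //.
    by exists 0%N; split => //; rewrite oner_neq0.
  by move=> k; rewrite mul1r.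
- apply: (@periodic_spec q.+1 q (fun i => (i == 1%N)%:R - (i == q)%:R)) => //.
    by exists 1%N; split => //; rewrite eqxx (ltn_eqF q1) subr0 oner_neq0.
  move=> k; rewrite -modnMmr.
  have : (k %% q.+1 < q.+1)%N by rewrite ltn_pmod.
  move: (k %% q.+1)%N => u hu.
  case: (posnP u) => [->|u0].
    by rewrite muln0 mod0n (ltn_eqF (ltnW q1)) subr0 mulN1r oppr0.
  have -> : (q * u = (u - 1) * q.+1 + (q.+1 - u))%N by nia.
  rewrite modnMDl modn_small; last by lia.
  have -> : (q.+1 - u == 1)%N = (u == q) by apply/eqP/eqP; lia.
  have -> : (q.+1 - u == q)%N = (u == 1)%N by apply/eqP/eqP; lia.
  by rewrite mulN1r opprB.
Qed.

Local Notation f := (real_complex R).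

Lemma spec_abs q (lam : R) : (1 < q)%N -> lam != 0 -> in_spec q lam ->
  exists j, `|lam| = (q ^ j)%:R.
Proof.
move=> q1 l0 [A [B [a [[hB0 hsz] hA ht hq]]]].
have q0 : (0 < q)%N by apply: ltnW.
have B0 : B != 0 by apply/eqP => e; move: hB0; rewrite e horner0 eqxx.
set d := (size B).-1.
have sB : size B = d.+1 by rewrite /d prednK // size_poly_gt0.
set P0 := \poly_(i < size B) B`_(d - i).
have key : forall n, Lf a ('X^n * P0) = 0.
  move=> n; rewrite mulrC Lf_mulXn (Lf_widen _ _ _ (size B)); last exact: size_poly.
  rewrite sB (reindex_inj rev_ord_inj) /=.
  have := ht (n + d)%N.
  rewrite [RHS]nth_default; last by apply: leq_trans (leq_addl n d); rewrite -ltnS -sB.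
  have -> : (n + d).+1 = (d.+1 + n)%N by rewrite addSn addnC.
  rewrite big_split_ord /= [X in _ + X]big1 ?addr0; last first.
    by move=> i _; rewrite nth_default ?mul0r // sB leq_addr.
  move=> e; rewrite -[X in _ = X]e; apply: eq_bigr => i _.
  have hi : (i <= d)%N by rewrite -ltnS ltn_ord.
  have e1 : (d.+1 - i.+1 = d - i)%N by rewrite subSS.
  rewrite coef_poly e1 sB ltnS leq_subr subKn //; congr (_ * a _).
  lia.
have ha : ann a P0 by apply: ann_of_Xn.
have [k0 hk0] : exists k, a k != 0.
  apply: NNPP => hall; apply: (negP hA); apply/eqP/polyP => n.
  rewrite coef0 -ht big1 // => i _.
  have : ~ (a (n - i)%N != 0) by move=> h; apply: hall; exists (n - i)%N.
  by move/negP; rewrite negbK => /eqP ->; rewrite mulr0.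
pose aC := fun i => f (a i).
pose P0C := map_poly f P0.
have lc : lead_coef B != 0 by rewrite lead_coef_eq0.
have P00 : P0`_0 != 0 by rewrite coef_poly size_poly_gt0 B0 subn0; exact: lc.
have hP0C : P0C != 0.
  rewrite map_poly_eq0; apply/eqP => e; move: P00; rewrite e coef0 eqxx //.
have hr0 : ~~ root P0C 0.
  by rewrite -(rmorph0 f) fmorph_root /root horner_coef0.
have haC : ann aC P0C.
  apply: ann_of_Xn => n.
  have -> : 'X^n * P0C = map_poly f ('X^n * P0) by rewrite rmorphM /= map_polyXn.
  by rewrite Lf_map key.
have lC0 : f lam != 0 by rewrite fmorph_eq0.
have hqC : forall k, aC (q * k)%N = f lam * aC k.
  by move=> k; rewrite /aC /= hq; apply: rmorphM.
have [N [D [N0 hND]]] := @step1 _ aC P0C q (f lam) q1 hP0C hr0 haC lC0 hqC.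
have hreal : forall n, Lf a ('X^n * ('X^N - 1) ^+ D) = 0.
  move=> n; have h := hND 'X^n.
  have e : map_poly f ('X^n * ('X^N - 1) ^+ D) = 'X^n * ('X^N - 1) ^+ D.
    by rewrite !(rmorphM, rmorphXn, rmorphB, rmorph1) /= map_polyX.
  rewrite -e Lf_map in h.
  by apply: (fmorph_inj f); rewrite rmorph0; exact: h.
apply: (@step2 R N q a lam) => //.
- by exists k0.
- exists D; apply: functional_extensionality => n.
  by rewrite -[LHS]LfXn Lf_iterDl hreal.
Qed.
End Main.

Theorem mainTheorem14 (R : realType) (m n : nat) :
  (2 <= m)%N -> (2 <= n)%N -> coprime m n ->
  forall lam : R, (in_spec m lam /\ in_spec n lam) <-> (lam = 0 \/ lam = 1 \/ lam = -1).
Proof.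
move=> m2 n2 cop lam; split.
- move=> [hm hn]; case: (eqVneq lam 0) => [->|l0]; first by left.
  have [j1 e1] := @spec_abs R m lam m2 l0 hm.
  have [j2 e2] := @spec_abs R n lam n2 l0 hn.
  have e : (m ^ j1 = n ^ j2)%N by apply/eqP; rewrite -(eqr_nat R) -e1 -e2.
  have j10 : j1 = 0%N.
    case: (posnP j1) => // j1p; exfalso.
    have dv : (m %| n ^ j2)%N by rewrite -e dvdn_exp.
    have := coprimeXr j2 cop; rewrite /coprime (gcdn_idPl dv) => /eqP m1.
    by move: m2; rewrite m1.
  move: e1; rewrite j10 expn0 => /eqP; rewrite eqr_norml ler01 andbT.
  by case/orP => /eqP ->; right; [left|right].
- move=> h; have [h0 h1 h2] := @spec_examples R m m2; have [k0 k1 k2] := @spec_examples R n n2.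
  by case: h => [->|[->|->]]; split.
Qed.
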